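(* Let $(x_i)_{i\in[n]}$ be i.i.d. Bernoulli random variables conditioned on the event $\sum_{i\in[n]}x_i=S$. Let $A,B_1,\dots,B_k$ partition $[n]$, and set $X=(x_i)_{i\in A}$, $Y_j=(x_i)_{i\in B_j}$, $Z_j=\sum_{i\in B_j}x_i$ for $1\le j\le k$. Let $f$ be a real-valued function and $\varphi(t)=\mathbb{E}\,e^{itf(X,Y_1,\dots,Y_k)}$. Then \[|\varphi(t)|^{2^k}\le\mathbb{E}_{Z_1,\dots,Z_k,Y_1^0,Y_1^1,\dots,Y_k^0,Y_k^1}\Big|\mathbb{E}_X\big[e^{it\alpha(f)(X,\mathbf{Y})}\,\big|\,Z_1,\dots,Z_k\big]\Big|,\] where $(Z_1,\dots,Z_k)$ has the distribution induced by the conditioned model, and given $Z_1,\dots,Z_k$ the vectors $Y_j^\ell$ ($1\le j\le k$, $\ell\in\{0,1\}$) are conditionally independent, each $Y_j^\ell$ uniform among $\{0,1\}$-vectors indexed by $B_j$ with exactly $Z_j$ ones, and the inner expectation is over $X$ with its conditional distribution given $Z_1,\dots,Z_k$.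
   Context: For $f(X,Y_1,\dots,Y_k)$, the decoupling operator $\alpha$ is $\alpha(f)(X,Y_1^0,Y_1^1,\dots,Y_k^0,Y_k^1)=\sum_{\mathbf{v}\in\{0,1\}^k}(-1)^{|\mathbf{v}|}f(X,Y_1^{v_1},\dots,Y_k^{v_k})$, and $\mathbf{Y}=(Y_1^0,Y_1^1,\dots,Y_k^0,Y_k^1)$. *)

(* Defs.v *)
From HB Require Import structures.
From mathcomp Require Import all_boot all_order all_algebra.
From mathcomp Require Import all_classical all_reals.
From mathcomp Require Import trigo.
From mathcomp.real_closed Require Import complex.
Set Implicit Arguments. Unset Strict Implicit. Unset Printing Implicit Defensive.
Import Order.TTheory GRing.Theory Num.Theory.
Local Open Scope ring_scope.
Local Open Scope complex_scope.

Section Lemma211Defs.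
Variables (R : realType) (n k : nat).

Definition config := {ffun 'I_n -> bool}.

Definition ones (x : config) : nat := #|[set i | x i]|.

Definition ones_in (P : pred 'I_n) (x : config) : nat := #|[set i | P i && x i]|.

Definition bern_slice_weight (p : R) (S : nat) (x : config) : R :=
  if ones x == S then p ^+ ones x * (1 - p) ^+ (n - ones x) else 0.

Definition cond_bern (p : R) (S : nat) (x : config) : R :=
  bern_slice_weight p S x / \sum_(x' : config) bern_slice_weight p S x'.

(* The partition: part i = ord0 means i \in A, part i = lift ord0 j means i \in B_j. *)
Variable part : 'I_n -> 'I_k.+1.

Definition inA (i : 'I_n) : bool := part i == ord0.
Definition inB (j : 'I_k) (i : 'I_n) : bool := part i == lift ord0 j.

Definition Zof (x : config) : {ffun 'I_k -> nat} := [ffun j => ones_in (inB j) x].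

(* The configuration (X, Y_1^{v_1}, ..., Y_k^{v_k}): coordinates in A taken from x,
   coordinates in B_j taken from y1 if v_j = 1 and from y0 if v_j = 0. *)
Definition mix (x y0 y1 : config) (v : {ffun 'I_k -> bool}) : config :=
  [ffun i => match unlift ord0 (part i) with
             | None => x i
             | Some j => if v j then y1 i else y0 i end].

(* The decoupling operator alpha, for f a function of (X, Y_1, ..., Y_k)
   (encoded as a function of the full configuration). *)
Definition alpha (f : config -> R) (x y0 y1 : config) : R :=
  \sum_(v : {ffun 'I_k -> bool}) (-1) ^+ #|[set j | v j]| * f (mix x y0 y1 v).

Definition cis (theta : R) : R[i] := (cos theta +i* sin theta)%C.

Definition charfun (p : R) (S : nat) (f : config -> R) (t : R) : R[i] :=
  \sum_(x : config) (cond_bern p S x)%:C * cis (t * f x).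

(* Support of (Y_1, ..., Y_k) given Z = z: vectors on the B-blocks (encoded as
   configurations vanishing on A) with exactly z_j ones in B_j. *)
Definition Yslice (z : {ffun 'I_k -> nat}) : {set config} :=
  [set y : config | [forall i, inA i ==> ~~ y i] && [forall j, ones_in (inB j) y == z j]].

(* Joint law of (Y_1^l, ..., Y_k^l) given Z = z: independent, each Y_j^l uniform
   among {0,1}-vectors on B_j with z_j ones. *)
Definition Ylaw (z : {ffun 'I_k -> nat}) (y : config) : R :=
  if y \in Yslice z then #|Yslice z|%:R^-1 else 0.

Definition PZ (p : R) (S : nat) (z : {ffun 'I_k -> nat}) : R :=
  \sum_(x : config | Zof x == z) cond_bern p S x.

(* E_X[ e^{i t alpha(f)(X, Y)} | Z = z ], X having its conditional law given Z = z.
   (alpha f x y0 y1 only depends on the A-coordinates x, i.e. on X.) *)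
Definition condE_X (p : R) (S : nat) (f : config -> R) (t : R)
    (z : {ffun 'I_k -> nat}) (y0 y1 : config) : R[i] :=
  (\sum_(x : config | Zof x == z) (cond_bern p S x)%:C * cis (t * alpha f x y0 y1))
    / (PZ p S z)%:C.

(* E_{Z, Y^0, Y^1} | E_X [ e^{i t alpha(f)(X,Y)} | Z ] |, Z distributed as in the
   conditioned model (expectation of a function of Z = Zof x). *)
Definition decoupled_bound (p : R) (S : nat) (f : config -> R) (t : R) : R :=
  \sum_(x : config) cond_bern p S x *
    (\sum_(y0 : config) \sum_(y1 : config)
        Ylaw (Zof x) y0 * Ylaw (Zof x) y1 *
        Normc.normc (condE_X p S f t (Zof x) y0 y1)).

End Lemma211Defs.

(* Main.v *)
Require Import Defs.
From mathcomp Require Import all_boot all_order all_algebra.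
From mathcomp Require Import all_classical all_reals.
From mathcomp Require Import trigo.
From mathcomp Require Import ring lra.
From mathcomp.real_closed Require Import complex.
Import Order.TTheory GRing.Theory Num.Theory.
Local Open Scope ring_scope.
Set Implicit Arguments. Unset Strict Implicit. Unset Printing Implicit Defensive.



Section Avg.
Variable F : numFieldType.

Definition avg (T : finType) (A : {set T}) (g : T -> F) : F :=
  (#|A|%:R)^-1 * \sum_(x in A) g x.

Lemma avg_exchange (T1 T2 : finType) (A : {set T1}) (B : {set T2}) (g : T1 -> T2 -> F) :
  avg A (fun a => avg B (fun b => g a b)) = avg B (fun b => avg A (fun a => g a b)).
Proof.
rewrite /avg.
have e1 : forall (c : F) (I : finType) (C : {set I}) (h : I -> F),
  \sum_(i in C) c * h i = c * \sum_(i in C) h i by move=> *; rewrite big_distrr.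
rewrite !e1 mulrCA; congr (_ * _); congr (_ * _); exact: exchange_big.
Qed.

Lemma avg_const (T : finType) (A : {set T}) (c : F) :
  (0 < #|A|)%N -> avg A (fun _ => c) = c.
Proof.
move=> hA; rewrite /avg sumr_const -[c *+ _]mulr_natr mulrC -mulrA mulfV ?mulr1 //.
by rewrite pnatr_eq0 -lt0n.
Qed.

Lemma avg_eq (T : finType) (A : {set T}) (g h : T -> F) :
  (forall x, x \in A -> g x = h x) -> avg A g = avg A h.
Proof. by move=> e; rewrite /avg; congr (_ * _); apply: eq_bigr. Qed.

Lemma avg_sub (T : finType) (A : {set T}) (g h : T -> F) :
  avg A (fun x => g x - h x) = avg A g - avg A h.
Proof. by rewrite /avg big_split /= sumrN mulrDr mulrN. Qed.

Lemma avgM (T : finType) (A : {set T}) (c : F) (g : T -> F) :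
  avg A (fun x => c * g x) = c * avg A g.
Proof. by rewrite /avg -big_distrr /= mulrCA. Qed.

Lemma avgMr (T : finType) (A : {set T}) (c : F) (g : T -> F) :
  avg A (fun x => g x * c) = avg A g * c.
Proof. by rewrite /avg -big_distrl /= mulrA. Qed.

Lemma avg_regroup (T : finType) (K : eqType) (P : pred T) (key : T -> K) (g : T -> F) :
  avg [set x | P x] (fun x => avg [set x' | P x' && (key x' == key x)] g)
  = avg [set x | P x] g.
Proof.
rewrite /avg; congr (_ * _).
transitivity (\sum_(x in [set x | P x]) \sum_(x' in [set x | P x])
   ((key x' == key x)%:R * (#|[set x' | P x' && (key x' == key x)]|%:R)^-1 * g x')).
  apply: eq_bigr => x _; rewrite big_distrr /= [RHS]big_mkcond /= [LHS]big_mkcond /=.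
  apply: eq_bigr => x' _; rewrite !inE; case: (P x') => //=.
  by case: eqP => _; rewrite ?mul1r ?mul0r // mulr0.
rewrite exchange_big /=; apply: eq_bigr => x'; rewrite inE => Px'.
rewrite -big_distrl /=; rewrite -[RHS]mul1r; congr (_ * _).
transitivity (\sum_(x in [set x | P x && (key x' == key x)])
   (#|[set y | P y && (key y == key x')]|%:R)^-1 : F).
  rewrite [RHS]big_mkcond [LHS]big_mkcond /=; apply: eq_bigr => x _; rewrite !inE.
  case: (P x) => //=; case: eqP => [e|]; rewrite ?mul0r //.
  rewrite mul1r; congr ((_ %:R)^-1); apply: eq_card => y; rewrite !inE e //.
have -> : [set x | P x && (key x' == key x)] = [set x'0 | P x'0 && (key x'0 == key x')].
  by apply/setP => y; rewrite !inE eq_sym.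
rewrite sumr_const -[_ *+ _]mulr_natr mulVf // pnatr_eq0 -lt0n.
by apply/card_gt0P; exists x'; rewrite inE Px' eqxx.
Qed.

End Avg.



Section RealAvg.
Variable R : realFieldType.

Lemma avg_ge0 (T : finType) (A : {set T}) (a : T -> R) :
  (forall x, x \in A -> 0 <= a x) -> 0 <= avg A a.
Proof.
move=> h; rewrite /avg mulr_ge0 ?invr_ge0 ?ler0n //; exact: sumr_ge0.
Qed.

Lemma avg_le (T : finType) (A : {set T}) (a b : T -> R) :
  (forall x, x \in A -> a x <= b x) -> avg A a <= avg A b.
Proof.
move=> h; rewrite /avg ler_wpM2l ?invr_ge0 ?ler0n //; exact: ler_sum.
Qed.

Lemma avg_sq (T : finType) (A : {set T}) (a : T -> R) :
  avg A a ^+ 2 <= avg A (fun x => a x ^+ 2).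
Proof.
case: (posnP #|A|) => [A0|Apos].
  by rewrite /avg A0 invr0 !mul0r expr0n.
set N : R := #|A|%:R.
have N0 : 0 < N by rewrite ltr0n.
set s := \sum_(x in A) a x; set Q := \sum_(x in A) a x ^+ 2.
have -> : avg A a = s / N by rewrite /avg mulrC.
have -> : avg A (fun x => a x ^+ 2) = Q / N by rewrite /avg mulrC.
set m := s / N.
have hs : s = m * N by rewrite /m mulfVK // gt_eqF.
have h : \sum_(i in A) (a i - m) ^+ 2 = Q - (m * s) *+ 2 + m ^+ 2 * N.
  rewrite (eq_bigr (fun i => a i ^+ 2 - (a i * m) *+ 2 + m ^+ 2)) => [|i _]; last by rewrite sqrrB.
  rewrite big_split big_split /= sumrN sumr_const -/Q -mulr_natr.
  by rewrite sumrMnl -big_distrl /= -/s [s * m]mulrC !mulr_natr.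
have : 0 <= \sum_(i in A) (a i - m) ^+ 2 by apply: sumr_ge0 => i _; exact: sqr_ge0.
rewrite h hs => H.
rewrite ler_pdivlMr //.
have e : m * (m * N) = m ^+ 2 * N by rewrite mulrA expr2.
move: H; rewrite e -mulr_natr; lra.
Qed.

Lemma avg_pow2 (T : finType) (A : {set T}) (a : T -> R) (j : nat) :
  (forall x, x \in A -> 0 <= a x) ->
  avg A a ^+ (2 ^ j) <= avg A (fun x => a x ^+ (2 ^ j)).
Proof.
move=> a0; elim: j => [|j IH].
  by rewrite expn0 expr1 (@avg_eq _ _ _ _ a) // => x _; rewrite expr1.
rewrite expnSr !exprM.
have -> : avg A (fun x => a x ^+ (2 ^ j * 2)) = avg A (fun x => (a x ^+ (2 ^ j)) ^+ 2).
  by apply: avg_eq => x _; rewrite exprM.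
apply: le_trans (avg_sq A (fun x => a x ^+ (2 ^ j))).
rewrite ler_pXn2r // ?nnegrE ?exprn_ge0 ?avg_ge0 //.
by move=> x /a0 h; rewrite exprn_ge0.
Qed.

End RealAvg.



Section Cplx.
Variable R : realType.
Local Notation normc := (@Normc.normc R).

Lemma normc_ge0 (z : R[i]) : 0 <= normc z.
Proof. by case: z => a b; rewrite /= sqrtr_ge0. Qed.

Lemma normc_sum (I : Type) (r : seq I) (P : pred I) (F : I -> R[i]) :
  normc (\sum_(i <- r | P i) F i) <= \sum_(i <- r | P i) normc (F i).
Proof.
elim/big_rec2: _ => [|i y1 y2 _ H]; first by rewrite Normc.normc0.
apply: le_trans (le_normcD _ _) _; by rewrite lerD2l.
Qed.

Lemma normc_real (r : R) : 0 <= r -> normc (r%:C)%C = r.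
Proof. by move=> r0; rewrite /= expr0n addr0 sqrtr_sqr ger0_norm. Qed.

Lemma normc_nat (m : nat) : normc (m%:R) = m%:R.
Proof. by rewrite -(rmorph_nat (real_complex R)) normc_real ?ler0n. Qed.

Lemma normc_avg (T : finType) (A : {set T}) (g : T -> R[i]) :
  normc (avg A g) <= avg A (fun x => normc (g x)).
Proof.
rewrite /avg Normc.normcM Normc.normcV normc_nat ler_wpM2l ?invr_ge0 ?ler0n //.
exact: normc_sum.
Qed.

Lemma normc_sq (z : R[i]) : ((normc z) ^+ 2)%:C%C = z * (z^*)%C.
Proof.
case: z => a b /=; rewrite sqr_sqrtr ?addr_ge0 ?sqr_ge0 //.
apply/eqP; rewrite eq_complex /=; apply/andP; split; apply/eqP; ring.
Qed.

Lemma normc_cis (th : R) : normc (cis th) = 1.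
Proof. by rewrite /cis /= cos2Dsin2 sqrtr1. Qed.

Lemma cis_mulJ (a b : R) : cis a * ((cis b)^*)%C = cis (a - b).
Proof.
rewrite /cis /= cosB sinB; apply/eqP; rewrite eq_complex /=; apply/andP; split; apply/eqP; ring.
Qed.

Lemma conjc_avg (T : finType) (A : {set T}) (g : T -> R[i]) :
  ((avg A g)^*)%C = avg A (fun x => ((g x)^*)%C).
Proof.
rewrite /avg rmorphM rmorph_sum /=; congr (_ * _).
by rewrite -(rmorph_nat (real_complex R)) -fmorphV conjc_real.
Qed.

Lemma avgC (T : finType) (A : {set T}) (a : T -> R) :
  ((avg A a)%:C)%C = avg A (fun x => ((a x)%:C)%C).
Proof.
by rewrite /avg rmorphM rmorph_sum fmorphV rmorph_nat.
Qed.

End Cplx.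



Local Notation fsubsetP := fintype.subsetP.
Section Comb.
Variables (R : realType) (n k : nat) (part : 'I_n -> 'I_k.+1).
Local Notation config := (config n).

Definition repl (m : 'I_k) (x u : config) : config :=
  [ffun i => if inB part m i then u i else x i].

Definition mixJ (J V : {set 'I_k}) (x y0 y1 : config) : config :=
  [ffun i => match unlift ord0 (part i) with
             | None => x i
             | Some j => if j \in J then (if j \in V then y1 i else y0 i) else x i end].

Definition alphaJ (f : config -> R) (J : {set 'I_k}) (x y0 y1 : config) : R :=
  \sum_(V : {set 'I_k} | V \subset J) (-1) ^+ #|V| * f (mixJ J V x y0 y1).

Lemma mixJ_step (m : 'I_k) (J V : {set 'I_k}) (x y0 y1 u0 u1 : config) :
  m \notin J ->
  mixJ (m |: J) V x (repl m y0 u0) (repl m y1 u1)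
  = mixJ J (V :\ m) (repl m x (if m \in V then u1 else u0)) y0 y1.
Proof.
move=> mJ; apply/ffunP => i; rewrite !ffunE /inB.
case: unliftP => [j|] e; rewrite e.
  rewrite (inj_eq (@lift_inj _ ord0)) !inE.
  case: (eqVneq j m) => [->|jm] /=.
    by rewrite (negbTE mJ); case: (m \in V).
  by [].
by rewrite (negbTE (neq_lift _ _)).
Qed.

Lemma alphaJ_step (f : config -> R) (m : 'I_k) (J : {set 'I_k}) (x y0 y1 u0 u1 : config) :
  m \notin J ->
  alphaJ f (m |: J) x (repl m y0 u0) (repl m y1 u1)
  = alphaJ f J (repl m x u0) y0 y1 - alphaJ f J (repl m x u1) y0 y1.
Proof.
move=> mJ; rewrite /alphaJ (bigID (fun V : {set 'I_k} => m \in V)) /= addrC; congr (_ + _).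
  apply: eq_big => V.
    apply/idP/idP => [/andP[sV mV]|sV].
      apply/fsubsetP => j jV; have := fsubsetP sV j jV; rewrite !inE.
      by case: eqP => // ejm; move: mV; rewrite -ejm jV.
    rewrite (fintype.subset_trans sV (finset.subsetUr _ _)) /=; apply/negP => mV.
    by move: mJ; rewrite (fsubsetP sV m mV).
  move=> /andP[_ mV]; rewrite mixJ_step // (negbTE mV).
  congr (_ * f (mixJ J _ _ _ _)); apply/setP => j; rewrite !inE.
  by case: eqP => // ->; rewrite (negbTE mV).
rewrite (reindex_onto (fun W => m |: W) (fun V => V :\ m)) /=; last first.
  by move=> V /andP[_ mV]; rewrite finset.setD1K.
rewrite -sumrN; apply: eq_big => W.
  rewrite finset.setU11 andbT; apply/idP/idP => [/andP[sWJ /eqP e]|sW].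
    have mW : m \notin W by rewrite -e !inE eqxx.
    apply/fsubsetP => j jW; have := fsubsetP sWJ j; rewrite !inE jW orbT => /(_ isT).
    by case/orP => // /eqP ejm; move: mW; rewrite -ejm jW.
  have mW : m \notin W by apply/negP => /(fsubsetP sW) mJ'; move: mJ; rewrite mJ'.
  by rewrite finset.setUS //= finset.setU1K.
move=> /andP[_ /eqP e].
have mW : m \notin W by rewrite -e !inE eqxx.
rewrite mixJ_step // finset.setU11 finset.setU1K // finset.cardsU1 mW add1n exprS.
by rewrite mulN1r mulNr.
Qed.


Lemma repl_invl (m : 'I_k) (x u : config) : repl m (repl m x u) (repl m u x) = x.
Proof. by apply/ffunP => i; rewrite !ffunE; case: (inB part m i). Qed.

Lemma repl_repl2 (m : 'I_k) (x u v : config) : repl m x (repl m u v) = repl m x v.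
Proof. by apply/ffunP => i; rewrite !ffunE; case: (inB part m i). Qed.

Lemma avg_resample (F : numFieldType) (m : 'I_k) (T U : {set config}) (g : config -> F) :
  (forall x u, x \in T -> u \in U -> (repl m x u \in T) && (repl m u x \in U)) ->
  (0 < #|U|)%N ->
  avg T (fun x => avg U (fun u => g (repl m x u))) = avg T g.
Proof.
move=> cl U0.
have key : \sum_(x in T) \sum_(u in U) g (repl m x u) = \sum_(x in T) \sum_(u in U) g x.
  rewrite !pair_big_dep /=.
  pose sw := fun p : config * config => (repl m p.1 p.2, repl m p.2 p.1).
  have swK : involutive sw by case=> a b; rewrite /sw /= !repl_invl.
  rewrite (reindex_inj (inv_inj swK)) /=; apply: eq_big => [[a b]|[a b]] /=.
    apply/idP/idP => [h|/andP[aT bU]]; last exact: cl.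
    by have := cl _ _ (proj1 (andP h)) (proj2 (andP h)); rewrite !repl_invl.
  by rewrite repl_invl.
rewrite /avg.
have e1 : forall (c : F) (h : config -> F),
  \sum_(i in T) c * h i = c * \sum_(i in T) h i by move=> *; rewrite big_distrr.
rewrite e1 key; congr (_ * _).
rewrite (eq_bigr (fun x => g x * #|U|%:R)); last first.
  by move=> x _; rewrite sumr_const mulr_natr.
rewrite -big_distrl /= mulrC -mulrA mulfV ?mulr1 // pnatr_eq0 -lt0n //.
Qed.


Lemma alphaJ0 (f : config -> R) (x y0 y1 : config) :
  alphaJ f finset.set0 x y0 y1 = f x.
Proof.
rewrite /alphaJ (eq_bigl (pred1 finset.set0)); last by move=> V; rewrite finset.subset0.
rewrite big_pred1_eq finset.cards0 expr0 mul1r; congr (f _).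
apply/ffunP => i; rewrite ffunE; case: (unlift ord0 (part i)) => // j.
by rewrite finset.in_set0.
Qed.

Lemma alphaJT (f : config -> R) (x y0 y1 : config) :
  alphaJ f [set: 'I_k] x y0 y1 = alpha part f x y0 y1.
Proof.
rewrite /alphaJ /alpha (eq_bigl xpredT); last by move=> V; rewrite finset.subsetT.
rewrite (reindex (fun v : {ffun 'I_k -> bool} => [set j | v j])) /=; last first.
  exists (fun V : {set 'I_k} => [ffun j => j \in V]) => [v _|V _].
    by apply/ffunP => j; rewrite ffunE inE.
  by apply/setP => j; rewrite inE ffunE.
apply: eq_bigr => v _; congr (_ * f _).
apply/ffunP => i; rewrite !ffunE; case: (unlift ord0 (part i)) => // j.
by rewrite finset.in_setT inE.
Qed.

End Comb.



Section Core.
Variables (R : realType) (n k : nat) (part : 'I_n -> 'I_k.+1).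
Variables (f : config n -> R) (t : R) (T U : {set config n}).
Hypothesis hcl : forall m x u, x \in T -> u \in U ->
  (repl part m x u \in T) && (repl part m u x \in U).
Hypothesis hclU : forall m x u, x \in U -> u \in U ->
  (repl part m x u \in U) && (repl part m u x \in U).
Hypothesis U0 : (0 < #|U|)%N.
Local Notation normc := (@Normc.normc R).

Lemma pow_le (a b : R) (e : nat) : 0 <= a -> a <= b -> a ^+ e <= b ^+ e.
Proof. move=> a0 ab; apply: lerXn2r; rewrite // nnegrE //; exact: le_trans ab. Qed.

Definition Phi (J : {set 'I_k}) (y0 y1 : config n) : R[i] :=
  avg T (fun x => cis (t * alphaJ part f J x y0 y1)).

Definition Q (J : {set 'I_k}) (e : nat) : R :=
  avg U (fun y0 => avg U (fun y1 => normc (Phi J y0 y1) ^+ e)).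

Lemma point_step (m : 'I_k) (J : {set 'I_k}) (N : nat) (y0 y1 : config n) :
  m \notin J ->
  normc (Phi J y0 y1) ^+ (2 ^ N.+1) <=
  avg U (fun u0 => avg U (fun u1 =>
     normc (Phi (m |: J) (repl part m y0 u0) (repl part m y1 u1)) ^+ (2 ^ N))).
Proof.
move=> mJ.
pose Ph := fun w => cis (t * alphaJ part f J w y0 y1).
pose h := fun x => avg U (fun u => Ph (repl part m x u)).
pose G0 := fun u0 u1 => normc (Phi (m |: J) (repl part m y0 u0) (repl part m y1 u1)).
have G0ge0 : forall u0 u1, 0 <= G0 u0 u1 by move=> *; exact: normc_ge0.
have eP : Phi J y0 y1 = avg T h.
  by rewrite /h (avg_resample (F := R[i]) Ph (hcl m) U0).
have sq : normc (Phi J y0 y1) ^+ 2 <= avg U (fun u0 => avg U (fun u1 => G0 u0 u1)).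
  rewrite eP.
  apply: le_trans (_ : avg T (fun x => normc (h x)) ^+ 2 <= _).
    apply: pow_le; [exact: normc_ge0 | exact: normc_avg].
  apply: le_trans (avg_sq _ _) _.
  have eq2 : avg T (fun x => normc (h x) ^+ 2) =
      normc (avg U (fun u0 => avg U (fun u1 => Phi (m |: J) (repl part m y0 u0) (repl part m y1 u1)))).
    rewrite -[LHS]normc_real; last by apply: avg_ge0 => x _; exact: sqr_ge0.
    congr (normc _); rewrite avgC.
    transitivity (avg T (fun x => avg U (fun u0 => avg U (fun u1 =>
       cis (t * alphaJ part f (m |: J) x (repl part m y0 u0) (repl part m y1 u1)))))).
      apply: avg_eq => x _; rewrite normc_sq /h conjc_avg -avgMr.
      apply: avg_eq => u0 _; rewrite -avgM; apply: avg_eq => u1 _.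
      by rewrite /Ph cis_mulJ alphaJ_step // mulrBr.
    rewrite avg_exchange; apply: avg_eq => u0 _; rewrite avg_exchange //.
  rewrite eq2; apply: le_trans (normc_avg _ _) _.
  apply: avg_le => u0 _; exact: normc_avg.
rewrite expnSr mulnC exprM.
apply: le_trans (_ : avg U (fun u0 => avg U (fun u1 => G0 u0 u1)) ^+ (2 ^ N) <= _).
  by apply: pow_le => //; rewrite exprn_ge0 // normc_ge0.
apply: le_trans (avg_pow2 (A := U) (a := fun u0 => avg U (fun u1 => G0 u0 u1)) N _) _.
  by move=> u0 _; apply: avg_ge0 => u1 _.
apply: avg_le => u0 _; apply: avg_pow2 => u1 _; exact: G0ge0.
Qed.


Lemma le_eqVlt_helper (a b : R) : a = b -> a <= b.
Proof. by move=> ->. Qed.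

Lemma Q_step (m : 'I_k) (J : {set 'I_k}) (N : nat) :
  m \notin J -> Q J (2 ^ N.+1) <= Q (m |: J) (2 ^ N).
Proof.
move=> mJ.
pose G := fun a b => normc (Phi (m |: J) a b) ^+ (2 ^ N).
apply: le_trans (_ : avg U (fun y0 => avg U (fun y1 => avg U (fun u0 => avg U (fun u1 =>
   G (repl part m y0 u0) (repl part m y1 u1))))) <= _).
  by apply: avg_le => y0 _; apply: avg_le => y1 _; exact: point_step.
rewrite /Q -/G.
apply: le_eqVlt_helper.
transitivity (avg U (fun y0 => avg U (fun u0 => avg U (fun y1 => avg U (fun u1 =>
   G (repl part m y0 u0) (repl part m y1 u1)))))).
  by apply: avg_eq => y0 _; rewrite avg_exchange.
transitivity (avg U (fun y0 => avg U (fun u0 => avg U (fun y1 =>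
   G (repl part m y0 u0) y1)))).
  apply: avg_eq => y0 _; apply: avg_eq => u0 _.
  exact: (avg_resample (fun w => G (repl part m y0 u0) w) (hclU m) U0).
by rewrite (avg_resample (fun w => avg U (fun y1 => G w y1)) (hclU m) U0).
Qed.

Definition Jm (m : nat) : {set 'I_k} := [set j : 'I_k | (j < m)%N].

Lemma Q_chain (m : nat) : (m <= k)%N -> Q (Jm 0) (2 ^ k) <= Q (Jm m) (2 ^ (k - m)).
Proof.
elim: m => [|m IH] mk; first by rewrite subn0.
have mk' : (m < k)%N by [].
apply: le_trans (IH (ltnW mk)) _.
pose mo := Ordinal mk'.
have eJ : Jm m.+1 = mo |: Jm m.
  by apply/setP => j; rewrite !inE ltnS leq_eqVlt.
have nJ : mo \notin Jm m by rewrite inE ltnn.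
rewrite eJ -(subnSK mk'); exact: Q_step.
Qed.

Theorem core_bound :
  normc (avg T (fun x => cis (t * f x))) ^+ (2 ^ k) <=
  avg U (fun y0 => avg U (fun y1 =>
     normc (avg T (fun x => cis (t * alpha part f x y0 y1))))).
Proof.
have := Q_chain (leqnn k); rewrite subnn expn0.
have e0 : Jm 0 = finset.set0 by apply/setP => j; rewrite !inE.
have eT : Jm k = [set: 'I_k] by apply/setP => j; rewrite !inE ltn_ord.
rewrite e0 eT /Q.
have -> : avg U (fun y0 => avg U (fun y1 => normc (Phi finset.set0 y0 y1) ^+ (2 ^ k)))
   = normc (avg T (fun x => cis (t * f x))) ^+ (2 ^ k).
  rewrite -[RHS](avg_const _ U0) ; apply: avg_eq => y0 _.
  rewrite -[RHS](avg_const _ U0) ; apply: avg_eq => y1 _.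
  by rewrite /Phi; congr (normc _ ^+ _); apply: avg_eq => x _; rewrite alphaJ0.
move/le_trans; apply; apply: avg_le => y0 _; apply: avg_le => y1 _.
rewrite expr1 /Phi; apply: le_eqVlt_helper; congr (normc _).
by apply: avg_eq => x _; rewrite alphaJT.
Qed.

End Core.



Section Closure.
Variables (n k : nat) (part : 'I_n -> 'I_k.+1).
Local Notation config := (config n).

Lemma ones_in_eq (P : pred 'I_n) (x y : config) :
  (forall i, P i -> x i = y i) -> ones_in P x = ones_in P y.
Proof.
move=> h; rewrite /ones_in; apply: eq_card => i; rewrite !inE.
by case Pi: (P i) => //=; rewrite h.
Qed.

Lemma inB_neq (j m : 'I_k) (i : 'I_n) : j != m -> inB part j i -> ~~ inB part m i.
Proof.
move=> jm; rewrite /inB => /eqP ->; rewrite (inj_eq (@lift_inj _ ord0)) //.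
Qed.

Lemma inA_inB (j : 'I_k) (i : 'I_n) : inA part i -> ~~ inB part j i.
Proof. by rewrite /inA /inB => /eqP ->; rewrite neq_lift. Qed.

Lemma Zof_repl (j m : 'I_k) (x u : config) :
  ones_in (inB part j) (repl part m x u) =
  if j == m then ones_in (inB part m) u else ones_in (inB part j) x.
Proof.
case: eqVneq => [->|jm]; apply: ones_in_eq => i Bi; rewrite ffunE.
  by rewrite Bi.
by rewrite (negbTE (inB_neq jm Bi)).
Qed.

Lemma ones_split (m : 'I_k) (x : config) :
  ones x = (ones_in (inB part m) x + ones_in (predC (inB part m)) x)%N.
Proof.
rewrite /ones /ones_in -(cardsID [set i | inB part m i]); congr (_ + _)%N.
  by apply: eq_card => i; rewrite !inE andbC.
by apply: eq_card => i; rewrite !inE andbC.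
Qed.

Lemma ones_repl (m : 'I_k) (x u : config) :
  ones_in (inB part m) u = ones_in (inB part m) x -> ones (repl part m x u) = ones x.
Proof.
move=> e; rewrite (ones_split m) [in RHS](ones_split m) Zof_repl eqxx e; congr (_ + _)%N.
apply: ones_in_eq => i /= Bi; rewrite ffunE (negbTE Bi) //.
Qed.

Definition Tz (S : nat) (z : {ffun 'I_k -> nat}) : {set config} :=
  [set x | (ones x == S) && (Zof part x == z)].

Lemma Tz_blk S z m x : x \in Tz S z -> ones_in (inB part m) x = z m.
Proof. by rewrite inE => /andP[_ /eqP <-]; rewrite ffunE. Qed.

Lemma Uz_blk z m x : x \in Yslice part z -> ones_in (inB part m) x = z m.
Proof. by rewrite inE => /andP[_ /forallP /(_ m) /eqP]. Qed.

Lemma repl_T S z m x u : x \in Tz S z -> ones_in (inB part m) u = z m ->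
  repl part m x u \in Tz S z.
Proof.
move=> xT um; have := xT; rewrite !inE => /andP[/eqP oS /eqP Zx].
rewrite ones_repl ?oS ?eqxx /=; last by rewrite um (Tz_blk m xT).
apply/eqP/ffunP => j; rewrite ffunE Zof_repl; case: eqVneq => [->|_] //.
by rewrite -Zx ffunE.
Qed.

Lemma repl_U z m u x : u \in Yslice part z -> ones_in (inB part m) x = z m ->
  repl part m u x \in Yslice part z.
Proof.
move=> uU xm; have := uU; rewrite !inE => /andP[/forallP hA /forallP hB].
apply/andP; split.
  apply/forallP => i; apply/implyP => Ai; rewrite ffunE (negbTE (inA_inB m Ai)).
  exact: (implyP (hA i) Ai).
apply/forallP => j; rewrite Zof_repl.
by case: (eqVneq j m) => [->|_]; [rewrite xm | exact: hB].
Qed.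

End Closure.



Section Final.
Variables (R : realType) (n k : nat) (part : 'I_n -> 'I_k.+1).
Variables (p : R) (S : nat) (f : config n -> R) (t : R).
Hypotheses (hp0 : 0 < p) (hp1 : p < 1).
Local Notation normc := (@Normc.normc R).

Definition D : {set config n} := [set x | ones x == S].

Lemma cond_bern_eq (x : config n) :
  cond_bern p S x = (ones x == S)%:R / (#|D|%:R).
Proof.
pose c := p ^+ S * (1 - p) ^+ (n - S).
have c0 : c != 0 by rewrite mulf_neq0 // expf_neq0 // ?gt_eqF // subr_gt0.
have ew : forall y : config n, bern_slice_weight p S y = (ones y == S)%:R * c.
  by move=> y; rewrite /bern_slice_weight; case: (ones y =P S) => [->|_]; rewrite ?eqxx ?mul1r ?mul0r.
have es : \sum_(y : config n) bern_slice_weight p S y = #|D|%:R * c.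
  rewrite (eq_bigr (fun y => (ones y == S)%:R * c)); last by move=> y _; exact: ew.
  rewrite -big_distrl /=; congr (_ * _).
  rewrite -sum1_card natr_sum [RHS]big_mkcond /=; apply: eq_bigr => y _; rewrite inE.
  by case: (ones y == S).
by rewrite /cond_bern ew es invfM mulrACA mulfV // mulr1.
Qed.

Lemma charfun_eq : charfun p S f t = avg D (fun x => cis (t * f x)).
Proof.
rewrite /charfun /avg big_distrr [RHS]big_mkcond /=; apply: eq_bigr => x _.
rewrite cond_bern_eq inE; case: (ones x == S) => /=.
  by rewrite mul1r fmorphV rmorph_nat.
by rewrite mul0r rmorph0 mul0r.
Qed.

Lemma num_eq (z : {ffun 'I_k -> nat}) (g : config n -> R[i]) :
  \sum_(x | Zof part x == z) (cond_bern p S x)%:C%C * g x =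
  (#|D|%:R)^-1 * \sum_(x in Tz part S z) g x.
Proof.
rewrite big_distrr [RHS]big_mkcond [LHS]big_mkcond /=; apply: eq_bigr => x _.
rewrite cond_bern_eq !inE andbC; case: (Zof part x == z) => //=; case: (ones x == S) => /=.
  by rewrite mul1r fmorphV rmorph_nat.
by rewrite mul0r rmorph0 mul0r.
Qed.

Lemma PZ_eq (z : {ffun 'I_k -> nat}) :
  PZ part p S z = #|Tz part S z|%:R / #|D|%:R.
Proof.
rewrite /PZ mulrC -[#|Tz part S z|]sum1_card natr_sum big_distrr [RHS]big_mkcond [LHS]big_mkcond /=.
apply: eq_bigr => x _.
rewrite cond_bern_eq !inE andbC; case: (Zof part x == z) => //=; case: (ones x == S) => /=.
  by rewrite mulr1 mul1r.
by rewrite mul0r.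
Qed.

Lemma condE_eq (z : {ffun 'I_k -> nat}) (y0 y1 : config n) : (0 < #|D|)%N ->
  condE_X part p S f t z y0 y1 =
  avg (Tz part S z) (fun x => cis (t * alpha part f x y0 y1)).
Proof.
move=> D0; rewrite /condE_X num_eq PZ_eq /avg.
rewrite rmorphM fmorphV !rmorph_nat /= invfM invrK.
have N0 : (#|D|%:R : R[i]) != 0 by rewrite pnatr_eq0 -lt0n.
by rewrite mulrC !mulrA mulfK.
Qed.

Lemma Ylaw_sum (z : {ffun 'I_k -> nat}) (h : config n -> R) :
  \sum_(y : config n) Ylaw R part z y * h y = avg (Yslice part z) h.
Proof.
rewrite /avg big_distrr [RHS]big_mkcond /=; apply: eq_bigr => y _.
by rewrite /Ylaw; case: (y \in Yslice part z); rewrite ?mul0r ?mulr0.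
Qed.

Lemma decoupled_eq :
  decoupled_bound part p S f t =
  avg D (fun x => avg (Yslice part (Zof part x)) (fun y0 =>
     avg (Yslice part (Zof part x)) (fun y1 => normc (condE_X part p S f t (Zof part x) y0 y1)))).
Proof.
rewrite (@avg_eq _ _ _ _ (fun x => \sum_(y0 : config n) Ylaw R part (Zof part x) y0 *
    \sum_(y1 : config n) Ylaw R part (Zof part x) y1 *
       normc (condE_X part p S f t (Zof part x) y0 y1))); last first.
  by move=> x _; rewrite -Ylaw_sum; apply: eq_bigr => y0 _; rewrite -Ylaw_sum.
rewrite /decoupled_bound /avg big_distrr [RHS]big_mkcond /=; apply: eq_bigr => x _.
rewrite cond_bern_eq inE; case: (ones x == S) => /=; last by rewrite !mul0r.
rewrite mul1r; congr (_ * _); apply: eq_bigr => y0 _.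
by rewrite big_distrr /=; apply: eq_bigr => y1 _; rewrite mulrA.
Qed.


Lemma Yslice_nonempty (x : config n) : (0 < #|Yslice part (Zof part x)|)%N.
Proof.
apply/card_gt0P; exists [ffun i => ~~ inA part i && x i]; rewrite inE; apply/andP; split.
  by apply/forallP => i; rewrite ffunE; case: (inA part i).
apply/forallP => j; rewrite ffunE; apply/eqP; apply: ones_in_eq => i Bi.
rewrite ffunE; case Ai: (inA part i) => //.
by move: (inA_inB j Ai); rewrite Bi.
Qed.

Theorem main_thm : normc (charfun p S f t) ^+ (2 ^ k) <= decoupled_bound part p S f t.
Proof.
rewrite charfun_eq decoupled_eq.
case: (posnP #|D|) => [D0 | Dpos].
  rewrite /avg D0 !invr0 !mul0r Normc.normc0 expr0n.
  by rewrite expn_eq0.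
rewrite -(avg_regroup (fun x : config n => ones x == S) (Zof part) (fun x => cis (t * f x))).
set h := (fun x => avg _ _).
apply: le_trans (_ : avg D (fun x => normc (h x)) ^+ (2 ^ k) <= _).
  apply: pow_le; [exact: normc_ge0 | exact: normc_avg].
apply: le_trans (avg_pow2 (A := D) (a := fun x => normc (h x)) k _) _.
  by move=> x _; exact: normc_ge0.
apply: avg_le => x xD.
set z := Zof part x.
have hcl : forall m x u, x \in Tz part S z -> u \in Yslice part z ->
    (repl part m x u \in Tz part S z) && (repl part m u x \in Yslice part z).
  move=> m x' u xT uU; rewrite repl_T ?(Uz_blk m uU) //.
  by rewrite repl_U // (Tz_blk m xT).
have hclU : forall m x u, x \in Yslice part z -> u \in Yslice part z ->
    (repl part m x u \in Yslice part z) && (repl part m u x \in Yslice part z).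
  move=> m x' u xU uU; rewrite repl_U ?(Uz_blk m uU) //.
  by rewrite repl_U // (Uz_blk m xU).
have := core_bound f t hcl hclU (Yslice_nonempty x).
rewrite /h /Tz -/z => H; apply: le_trans H _; apply: le_eqVlt_helper.
apply: avg_eq => y0 _; apply: avg_eq => y1 _; by rewrite condE_eq.
Qed.

End Final.


Unset Implicit Arguments.

Theorem lemma2p11 (R : realType) (n k : nat) (p : R) (S : nat)
    (hp0 : 0 < p) (hp1 : p < 1) (hS : (S <= n)%N)
    (part : 'I_n -> 'I_k.+1) (f : config n -> R) (t : R) :
  Normc.normc (charfun p S f t) ^+ (2 ^ k) <= decoupled_bound part p S f t.
Proof.
exact: (@main_thm R n k part p S f t hp0 hp1).
Qed.
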